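(* Let $\gamma>0$, let $\beta_1=\beta_1(\gamma)$ be the unique positive solution of $\frac{\sqrt\pi}{2}\gamma x(1+x)^{1/2}(3+x)=1$, let $0\le\beta<\beta_1$ and let $\mathrm{Ste}_\infty>0$. For each $\lambda>0$ let $\varphi_\lambda$ be the unique solution, within the set of bounded analytic functions $h:[0,\lambda]\to\mathbb{R}$ with $0\le h\le 1$, of \begin{align*} &[(1+\beta y(\eta))y'(\eta)]'+2\eta y'(\eta)=0, \quad 0<\eta<\lambda,\\ &y'(0)+\beta y(0)y'(0)-\gamma y(0)=0,\\ &y(\lambda)=1. \end{align*} Then the equation $$\frac{\varphi_\lambda'(\lambda)}{\lambda}=\frac{2}{(1+\beta)\,\mathrm{Ste}_\infty}$$ has at least one solution $\lambda>0$.
   Context: In the physical problem, $\mathrm{Ste}_\infty=c(T_f-T_\infty)/l$ is the Stefan number and $\gamma=2h_0\sqrt{\alpha_0}/k_0$. *)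

(* Defs.v *)
From Stdlib Require Import Reals.
From Coquelicot Require Import Coquelicot.
Open Scope R_scope.

Definition deriv_on_closed (f df : R -> R) (a b : R) : Prop :=
  forall x, a <= x <= b ->
    filterlim (fun t => (f t - f x) / (t - x))
      (within (fun t => a <= t <= b /\ t <> x) (locally x))
      (locally (df x)).

Definition analytic_on_closed (h : R -> R) (a b : R) : Prop :=
  forall x, a <= x <= b ->
    exists r : R, 0 < r /\ exists c : nat -> R,
      forall t, a <= t <= b -> Rabs (t - x) < r ->
        is_series (fun n => c n * (t - x) ^ n) (h t).

Definition is_sol (beta gamma lam : R) (y : R -> R) : Prop :=
  analytic_on_closed y 0 lam /\
  (exists M, forall eta, 0 <= eta <= lam -> Rabs (y eta) <= M) /\
  (forall eta, 0 <= eta <= lam -> 0 <= y eta <= 1) /\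
  exists dy : R -> R,
    deriv_on_closed y dy 0 lam /\
    (forall eta, 0 < eta < lam ->
       is_derive (fun s => (1 + beta * y s) * dy s) eta (- (2 * eta * dy eta))) /\
    dy 0 + beta * y 0 * dy 0 - gamma * y 0 = 0 /\
    y lam = 1.

(* Main.v *)
Require Import Defs.
From Stdlib Require Import Reals Lra Lia Psatz Classical.
From Coquelicot Require Import Coquelicot.
Open Scope R_scope.


Lemma mvt (f df : R -> R) a b : a < b ->
  (forall c, a < c < b -> derivable_pt_lim f c (df c)) ->
  (forall c, a <= c <= b -> continuity_pt f c) ->
  exists c, a < c < b /\ f b - f a = df c * (b - a).
Proof.
  intros Hab Hd Hc.
  set (pr1 := fun c (H : a < c < b) => exist (fun l => derivable_pt_lim f c l) (df c) (Hd c H)).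
  assert (pr2 : forall c, a < c < b -> derivable_pt id c).
  { intros c _. exact (derivable_pt_id c). }
  destruct (MVT f id a b pr1 pr2 Hab Hc) as [c [P HP]].
  { intros c _. apply derivable_continuous_pt, derivable_pt_id. }
  exists c; split; auto.
  rewrite (derive_pt_eq_0 _ _ _ (pr1 c P) (Hd c P)) in HP.
  rewrite (derive_pt_eq_0 _ _ _ (pr2 c P) (derivable_pt_lim_id c)) in HP.
  unfold id in HP. lra.
Qed.

Lemma cont_eps (f : R -> R) x :
  (forall eps, 0 < eps -> exists del, 0 < del /\ forall z, Rabs (z - x) < del -> Rabs (f z - f x) < eps) ->
  continuity_pt f x.
Proof.
  intros H eps Heps. destruct (H eps Heps) as [d [Hd Hz]].
  exists d; split; [lra|]. intros z [_ Hz2]. apply Hz. exact Hz2.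
Qed.

Lemma cont_eps_inv (f : R -> R) x : continuity_pt f x ->
  forall eps, 0 < eps -> exists del, 0 < del /\ forall z, Rabs (z - x) < del -> Rabs (f z - f x) < eps.
Proof.
  intros H eps Heps. destruct (H eps Heps) as [d [Hd Hz]].
  exists d; split; [lra|]. intros z Hz2.
  destruct (Req_dec z x) as [->|Hne].
  - unfold Rminus; rewrite Rplus_opp_r, Rabs_R0; lra.
  - apply (Hz z). split; [split; [exact I| auto]| exact Hz2].
Qed.

Lemma doc_eps f df a b x : deriv_on_closed f df a b -> a <= x <= b ->
  forall eps, 0 < eps -> exists del, 0 < del /\ forall t, a <= t <= b -> t <> x ->
   Rabs (t - x) < del -> Rabs ((f t - f x) / (t - x) - df x) < eps.
Proof.
  intros H Hx eps Heps.
  specialize (H x Hx). rewrite filterlim_locally in H.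
  destruct (H (mkposreal eps Heps)) as [d Hd].
  exists d; split; [apply cond_pos|]. intros t Ht Hne Hd'.
  apply (Hd t); [exact Hd'| split; auto].
Qed.


Definition clamp (l s : R) := Rmax 0 (Rmin l s).

Lemma clamp_range l s : 0 <= l -> 0 <= clamp l s <= l.
Proof. intros. unfold clamp, Rmax, Rmin. repeat destruct Rle_dec; lra. Qed.
Lemma clamp_id l s : 0 <= s <= l -> clamp l s = s.
Proof. intros. unfold clamp, Rmax, Rmin. repeat destruct Rle_dec; lra. Qed.
Lemma clamp_lip l s t : 0 <= l -> Rabs (clamp l s - clamp l t) <= Rabs (s - t).
Proof. intros. unfold clamp, Rmax, Rmin. repeat destruct Rle_dec; 
  repeat (unfold Rabs; destruct Rcase_abs); lra. Qed.

Lemma quot_bound (u v d : R) : v <> 0 -> Rabs (u / v - d) < 1 -> Rabs u <= (Rabs d + 1) * Rabs v.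
Proof.
  intros Hv H.
  assert (Hu : u = (u / v) * v) by (field; auto).
  rewrite Hu, Rabs_mult. apply Rmult_le_compat_r; [apply Rabs_pos|].
  pose proof (Rabs_triang_inv (u/v) d). lra.
Qed.

Lemma Y_cont y dy l s : 0 < l -> deriv_on_closed y dy 0 l ->
  continuity_pt (fun z => y (clamp l z)) s.
Proof.
  intros Hl Hd. apply cont_eps. intros eps Heps.
  set (x := clamp l s).
  assert (Hx : 0 <= x <= l) by (apply clamp_range; lra).
  destruct (doc_eps _ _ _ _ _ Hd Hx 1 Rlt_0_1) as [del [Hdel H]].
  set (M := Rabs (dy x) + 1).
  assert (HM : 0 < M) by (pose proof (Rabs_pos (dy x)); unfold M; lra).
  exists (Rmin del (eps / M)). split.
  { apply Rmin_pos; auto. apply Rdiv_lt_0_compat; auto. }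
  intros z Hz. fold x.
  pose proof (clamp_lip l z s ltac:(lra)). fold x in H0.
  set (t := clamp l z) in *.
  destruct (Req_dec t x) as [->|Hne].
  { unfold Rminus; rewrite Rplus_opp_r, Rabs_R0; lra. }
  assert (Ht : 0 <= t <= l) by (apply clamp_range; lra).
  assert (Hlt : Rabs (t - x) < Rmin del (eps / M)) by lra.
  pose proof (Rmin_l del (eps/M)). pose proof (Rmin_r del (eps/M)).
  specialize (H t Ht Hne ltac:(lra)).
  apply quot_bound in H; [|lra].
  fold M in H.
  apply Rle_lt_trans with (M * Rabs (t - x)); auto.
  apply Rlt_le_trans with (M * (eps / M)).
  - apply Rmult_lt_compat_l; lra.
  - right; field; lra.
Qed.


Definition Yf (y : R -> R) l s := y (clamp l s).
Definition kf beta y l s := 2 * s / (1 + beta * Yf y l s).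
Definition If beta y l t := RInt (kf beta y l) 0 t.
Definition Ef beta y l t := exp (- If beta y l t).

Lemma Y_deriv y dy l eta : deriv_on_closed y dy 0 l -> 0 < eta < l ->
  derivable_pt_lim (Yf y l) eta (dy eta).
Proof.
  intros Hd He eps Heps.
  destruct (doc_eps _ _ _ _ eta Hd ltac:(lra) eps Heps) as [del [Hdel H]].
  assert (Hp : 0 < Rmin del (Rmin eta (l - eta))).
  { apply Rmin_pos; auto. apply Rmin_pos; lra. }
  exists (mkposreal _ Hp). simpl. intros h Hh Hlt.
  pose proof (Rmin_l del (Rmin eta (l - eta))).
  pose proof (Rmin_r del (Rmin eta (l - eta))).
  pose proof (Rmin_l eta (l - eta)). pose proof (Rmin_r eta (l - eta)).
  assert (Hh2 : -h <= Rabs h /\ h <= Rabs h) by (split; [rewrite <- Rabs_Ropp|]; apply RRle_abs).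
  unfold Yf. rewrite !clamp_id by lra.
  specialize (H (eta + h) ltac:(lra) ltac:(lra)).
  replace (eta + h - eta) with h in H by ring. apply H. lra.
Qed.


Lemma k_cont beta y l s : 0 <= beta -> (forall z, continuity_pt (Yf y l) z) ->
  (forall z, 0 <= Yf y l z <= 1) -> continuity_pt (kf beta y l) s.
Proof.
  intros Hb Hc Hr. unfold kf.
  apply (continuity_pt_div (fun s => 2 * s) (fun s => 1 + beta * Yf y l s)).
  - apply (continuity_pt_mult (fun _ => 2) id). apply continuity_pt_const. intros a b; auto.
    apply derivable_continuous_pt, derivable_pt_id.
  - apply (continuity_pt_plus (fun _ => 1) (fun s => beta * Yf y l s)).
    apply continuity_pt_const. intros a b; auto.
    apply (continuity_pt_mult (fun _ => beta) (Yf y l)). apply continuity_pt_const. intros a b; auto.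
    apply Hc.
  - specialize (Hr s). nra.
Qed.

Lemma I_deriv beta y l x : 0 <= beta -> (forall z, continuity_pt (Yf y l) z) ->
  (forall z, 0 <= Yf y l z <= 1) -> derivable_pt_lim (If beta y l) x (kf beta y l x).
Proof.
  intros Hb Hc Hr. apply is_derive_Reals.
  unfold If. apply (is_derive_RInt (kf beta y l) (fun b => RInt (kf beta y l) 0 b) 0 x).
  - exists (mkposreal 1 Rlt_0_1). intros b _. apply (RInt_correct (V:=R_CompleteNormedModule)).
    apply ex_RInt_continuous. intros z _. apply continuity_pt_filterlim. apply k_cont; auto.
  - apply continuity_pt_filterlim. apply k_cont; auto.
Qed.

Lemma E_deriv beta y l x : 0 <= beta -> (forall z, continuity_pt (Yf y l) z) ->
  (forall z, 0 <= Yf y l z <= 1) -> derivable_pt_lim (Ef beta y l) x (- kf beta y l x * Ef beta y l x).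
Proof.
  intros Hb Hc Hr. unfold Ef.
  replace (- kf beta y l x * exp (- If beta y l x)) with (exp (- If beta y l x) * (- kf beta y l x)) by ring.
  apply (derivable_pt_lim_comp (fun t => - If beta y l t) exp).
  - apply (derivable_pt_lim_opp (If beta y l)). apply I_deriv; auto.
  - apply derivable_pt_lim_exp.
Qed.

Lemma E0 beta y l : Ef beta y l 0 = 1.
Proof. unfold Ef, If. rewrite RInt_point. unfold zero; simpl. rewrite Ropp_0, exp_0. reflexivity. Qed.


Lemma small_zero d : (forall eps, 0 < eps -> Rabs d < 2 * eps) -> d = 0.
Proof.
  intros H. destruct (Req_dec d 0) as [|Hn]; auto.
  pose proof (Rabs_pos_lt d Hn). specialize (H (Rabs d / 4) ltac:(lra)). lra.
Qed.

Lemma endpoint y dy l F x : 0 < l -> deriv_on_closed y dy 0 l -> (x = 0 \/ x = l) ->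
  continuity_pt F x -> (forall eta, 0 < eta < l -> derivable_pt_lim (Yf y l) eta (F eta)) ->
  (forall z, continuity_pt (Yf y l) z) -> dy x = F x.
Proof.
  intros Hl Hd Hx HF HY HYc.
  apply Rminus_diag_uniq, small_zero. intros eps Heps.
  assert (Hx' : 0 <= x <= l) by (destruct Hx; subst; lra).
  destruct (doc_eps _ _ _ _ _ Hd Hx' eps Heps) as [d1 [Hd1 H1]].
  destruct (cont_eps_inv _ _ HF eps Heps) as [d2 [Hd2 H2]].
  set (m := Rmin d1 (Rmin d2 l) / 2).
  pose proof (Rmin_l d1 (Rmin d2 l)). pose proof (Rmin_r d1 (Rmin d2 l)).
  pose proof (Rmin_l d2 l). pose proof (Rmin_r d2 l).
  assert (Hm : 0 < m). { unfold m. assert (0 < Rmin d1 (Rmin d2 l)) by (apply Rmin_pos; auto; apply Rmin_pos; auto). lra. }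
  assert (Hm1 : m < d1) by (unfold m; lra). assert (Hm2 : m < d2) by (unfold m; lra).
  assert (Hm3 : m < l) by (unfold m; lra).
  destruct Hx as [-> | ->].
  - destruct (mvt (Yf y l) F 0 m Hm) as [c [Hc Heq]].
    { intros c Hc. apply HY. lra. }
    { intros c _. apply HYc. }
    unfold Yf in Heq. rewrite !clamp_id in Heq by lra.
    specialize (H1 m ltac:(lra) ltac:(lra)). rewrite Rminus_0_r in H1.
    rewrite Rabs_pos_eq in H1 by lra. specialize (H1 Hm1).
    replace ((y m - y 0) / m) with (F c) in H1 by (rewrite Heq; field; lra).
    specialize (H2 c). rewrite Rminus_0_r, Rabs_pos_eq in H2 by lra. specialize (H2 ltac:(lra)).
    pose proof (Rabs_triang (dy 0 - F c) (F c - F 0)) as HT.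
    replace (dy 0 - F c + (F c - F 0)) with (dy 0 - F 0) in HT by ring. rewrite Rabs_minus_sym in H1. lra.
  - destruct (mvt (Yf y l) F (l - m) l ltac:(lra)) as [c [Hc Heq]].
    { intros c Hc. apply HY. lra. }
    { intros c _. apply HYc. }
    unfold Yf in Heq. rewrite !clamp_id in Heq by lra.
    specialize (H1 (l - m) ltac:(lra) ltac:(lra)).
    replace (l - m - l) with (- m) in H1 by ring.
    rewrite Rabs_Ropp, Rabs_pos_eq in H1 by lra. specialize (H1 Hm1).
    replace ((y (l - m) - y l) / - m) with (F c) in H1 by (field_simplify_eq; [lra|lra]).
    specialize (H2 c). rewrite Rabs_left1 in H2 by lra. specialize (H2 ltac:(lra)).
    pose proof (Rabs_triang (dy l - F c) (F c - F l)) as HT.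
    replace (dy l - F c + (F c - F l)) with (dy l - F l) in HT by ring.
    rewrite Rabs_minus_sym in H1. lra.
Qed.


Definition sol_data beta gamma l (y dy : R -> R) :=
  (forall eta, 0 <= eta <= l -> 0 <= y eta <= 1) /\ deriv_on_closed y dy 0 l /\
  (forall eta, 0 < eta < l -> is_derive (fun s => (1 + beta * y s) * dy s) eta (- (2 * eta * dy eta))) /\
  dy 0 + beta * y 0 * dy 0 - gamma * y 0 = 0 /\ y l = 1.

Lemma sol_Yr beta gamma l y dy : 0 < l -> sol_data beta gamma l y dy -> forall z, 0 <= Yf y l z <= 1.
Proof. intros Hl [H _] z. unfold Yf. apply H. apply clamp_range. lra. Qed.

Lemma sol_Yc beta gamma l y dy : 0 < l -> sol_data beta gamma l y dy -> forall z, continuity_pt (Yf y l) z.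
Proof. intros Hl [_ [H _]] z. unfold Yf. apply (Y_cont y dy); auto. Qed.

Lemma const_deriv0 f a b : (forall c, a < c < b -> derivable_pt_lim f c 0) ->
  forall x1 x2, a < x1 < b -> a < x2 < b -> f x1 = f x2.
Proof.
  intros H.
  assert (K : forall x1 x2, a < x1 < b -> a < x2 < b -> x1 < x2 -> f x1 = f x2).
  { intros x1 x2 H1 H2 H12.
    destruct (mvt f (fun _ => 0) x1 x2 H12) as [c [Hc Heq]].
    - intros c Hc. apply H. lra.
    - intros c Hc. apply derivable_continuous_pt. exists 0. apply H. lra.
    - lra. }
  intros x1 x2 H1 H2. destruct (Rtotal_order x1 x2) as [h|[h|h]].
  - auto.
  - subst; auto.
  - symmetry; auto.
Qed.

Lemma E_cont beta y l x : 0 <= beta -> (forall z, continuity_pt (Yf y l) z) ->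
  (forall z, 0 <= Yf y l z <= 1) -> continuity_pt (Ef beta y l) x.
Proof. intros. apply derivable_continuous_pt. eexists. apply E_deriv; auto. Qed.

Lemma rep beta gamma l y dy : 0 < l -> 0 <= beta -> sol_data beta gamma l y dy ->
  forall eta, 0 <= eta <= l -> dy eta = gamma * y 0 * Ef beta y l eta / (1 + beta * Yf y l eta).
Proof.
  intros Hl Hb Hs.
  pose proof (sol_Yr _ _ _ _ _ Hl Hs) as HYr. pose proof (sol_Yc _ _ _ _ _ Hl Hs) as HYc.
  destruct Hs as [Hrange [Hd [Hode [Hbc Hend]]]].
  set (E := Ef beta y l).
  assert (HE : forall x, derivable_pt_lim E x (- kf beta y l x * E x)) by (intros; apply E_deriv; auto).
  assert (HEp : forall x, 0 < E x) by (intros; apply exp_pos).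
  set (p := fun s => (1 + beta * y s) * dy s).
  set (r := fun s => p s / E s).
  assert (Hr : forall c, 0 < c < l -> derivable_pt_lim r c 0).
  { intros c Hc.
    assert (Hpc : derivable_pt_lim p c (- (2 * c * dy c))) by (apply is_derive_Reals; apply Hode; auto).
    assert (H := derivable_pt_lim_div p E c _ _ Hpc (HE c) (Rgt_not_eq _ _ (HEp c))).
    replace 0 with ((- (2 * c * dy c) * E c - - kf beta y l c * E c * p c) / (E c)²).
    - exact H.
    - unfold kf, p, Yf. rewrite clamp_id by lra.
      specialize (Hrange c ltac:(lra)). pose proof (HEp c).
      field. split; [nra| unfold Rsqr; nra]. }
  set (C := r (l / 2)).
  assert (Hint : forall c, 0 < c < l -> dy c = C * E c / (1 + beta * Yf y l c)).
  { intros c Hc. assert (Hrc : r c = C) by (apply (const_deriv0 r 0 l Hr); lra).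
    unfold r, p in Hrc. unfold Yf. rewrite clamp_id by lra.
    specialize (Hrange c ltac:(lra)). pose proof (HEp c).
    rewrite <- Hrc. field. split; [lra|nra]. }
  set (F := fun s => C * E s / (1 + beta * Yf y l s)).
  assert (HFc : forall x, continuity_pt F x).
  { intros x. unfold F.
    apply (continuity_pt_div (fun s => C * E s) (fun s => 1 + beta * Yf y l s)).
    - apply (continuity_pt_mult (fun _ => C) E). apply continuity_pt_const. intros a b; auto.
      apply E_cont; auto.
    - apply (continuity_pt_plus (fun _ => 1) (fun s => beta * Yf y l s)).
      apply continuity_pt_const. intros a b; auto.
      apply (continuity_pt_mult (fun _ => beta) (Yf y l)). apply continuity_pt_const. intros a b; auto.
      apply HYc.
    - specialize (HYr x). nra. }
  assert (HYF : forall c, 0 < c < l -> derivable_pt_lim (Yf y l) c (F c)).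
  { intros c Hc. unfold F. rewrite <- Hint by auto. apply Y_deriv; auto. }
  assert (H0 : dy 0 = F 0) by (apply (endpoint y dy l F 0); auto).
  assert (Hl' : dy l = F l) by (apply (endpoint y dy l F l); auto).
  assert (HC : C = gamma * y 0).
  { unfold F in H0. unfold E in H0. rewrite E0 in H0. unfold Yf in H0. rewrite clamp_id in H0 by lra.
    specialize (Hrange 0 ltac:(lra)).
    assert (Hpos : 0 < 1 + beta * y 0) by nra.
    rewrite H0 in Hbc. assert (HH : dy 0 * (1 + beta * y 0) = C) by (rewrite H0; field; lra). nra. }
  intros eta Heta.
  destruct (Req_dec eta 0) as [->|h0]; [rewrite H0; unfold F; rewrite HC; reflexivity|].
  destruct (Req_dec eta l) as [->|h1]; [rewrite Hl'; unfold F; rewrite HC; reflexivity|].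
  rewrite Hint by lra. rewrite HC. reflexivity.
Qed.


Lemma exp_le x y : x <= y -> exp x <= exp y.
Proof. intros [H| ->]; [left; apply exp_increasing; auto| lra]. Qed.

Lemma I0 beta y l : If beta y l 0 = 0.
Proof. unfold If. rewrite RInt_point. reflexivity. Qed.

Lemma k_bounds beta y l s : 0 <= beta -> (forall z, 0 <= Yf y l z <= 1) -> 0 <= s ->
  0 <= kf beta y l s <= 2 * s.
Proof.
  intros Hb Hr Hs. unfold kf. specialize (Hr s).
  assert (H1 : 1 <= 1 + beta * Yf y l s) by nra.
  split.
  - apply Rdiv_le_0_compat; lra.
  - apply Rle_trans with (2 * s / 1); [|right; field].
    apply Rmult_le_compat_l; [lra|]. apply Rinv_le_contravar; lra.
Qed.

Lemma I_nonneg beta y l x : 0 <= beta -> (forall z, continuity_pt (Yf y l) z) ->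
  (forall z, 0 <= Yf y l z <= 1) -> 0 <= x -> 0 <= If beta y l x.
Proof.
  intros Hb Hc Hr Hx. destruct Hx as [Hx| <-]; [|rewrite I0; lra].
  destruct (mvt (If beta y l) (kf beta y l) 0 x Hx) as [c [Hcx Heq]].
  - intros; apply I_deriv; auto.
  - intros; apply derivable_continuous_pt; eexists; apply I_deriv; auto.
  - rewrite I0 in Heq. pose proof (k_bounds beta y l c Hb Hr ltac:(lra)). nra.
Qed.

Lemma I_le_sq beta y l x : 0 <= beta -> (forall z, continuity_pt (Yf y l) z) ->
  (forall z, 0 <= Yf y l z <= 1) -> 0 <= x -> If beta y l x <= x * x.
Proof.
  intros Hb Hc Hr Hx. destruct Hx as [Hx| <-]; [|rewrite I0; lra].
  destruct (mvt (fun s => s * s - If beta y l s) (fun s => 2 * s - kf beta y l s) 0 x Hx) as [c [Hcx Heq]].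
  - intros c _. apply (derivable_pt_lim_minus (fun s => s * s) (If beta y l)).
    + replace (2 * c) with (1 * id c + id c * 1) by (unfold id; ring).
      apply (derivable_pt_lim_mult id id); apply derivable_pt_lim_id.
    + apply I_deriv; auto.
  - intros c _. apply derivable_continuous_pt. eexists.
    apply (derivable_pt_lim_minus (fun s => s * s) (If beta y l)).
    + apply (derivable_pt_lim_mult id id); apply derivable_pt_lim_id.
    + apply I_deriv; auto.
  - rewrite I0 in Heq. pose proof (k_bounds beta y l c Hb Hr ltac:(lra)). nra.
Qed.

Lemma E_bounds beta y l x : 0 <= beta -> (forall z, continuity_pt (Yf y l) z) ->
  (forall z, 0 <= Yf y l z <= 1) -> 0 <= x -> 0 < Ef beta y l x <= 1 /\ 1 - x * x <= Ef beta y l x.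
Proof.
  intros Hb Hc Hr Hx. unfold Ef.
  pose proof (I_nonneg beta y l x Hb Hc Hr Hx). pose proof (I_le_sq beta y l x Hb Hc Hr Hx).
  split; [split|].
  - apply exp_pos.
  - rewrite <- exp_0. apply exp_le. lra.
  - pose proof (exp_ineq1_le (- If beta y l x)). lra.
Qed.

Lemma CI (P : R -> Prop) m : 0 <= m ->
  (forall eta, 0 <= eta <= m -> (forall s, 0 <= s < eta -> P s) -> P eta) ->
  (forall eta, 0 <= eta < m -> P eta -> exists d, 0 < d /\ forall s, eta <= s < eta + d -> P s) ->
  forall eta, 0 <= eta <= m -> P eta.
Proof.
  intros Hm Hcl Hop.
  set (S := fun t => 0 <= t <= m /\ forall s, 0 <= s <= t -> P s).
  assert (HS0 : S 0).
  { split; [lra|]. intros s Hs. replace s with 0 by lra. apply Hcl; [lra|]. intros; lra. }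
  destruct (completeness S) as [T [HT1 HT2]].
  { exists m. intros t [Ht _]. lra. }
  { exists 0; auto. }
  assert (HT0 : 0 <= T) by (apply HT1; auto).
  assert (HTm : T <= m) by (apply HT2; intros t [Ht _]; lra).
  assert (Hbelow : forall s, 0 <= s < T -> P s).
  { intros s Hs. destruct (classic (exists t, S t /\ s <= t)) as [[t [[_ Ht] Hst]]|Hn].
    - apply Ht; lra.
    - exfalso. assert (is_upper_bound S s).
      { intros t Ht. destruct (Rle_dec t s); auto. exfalso; apply Hn. exists t; split; auto; lra. }
      specialize (HT2 s H). lra. }
  assert (HST : S T).
  { split; [lra|]. intros s Hs. destruct (Req_dec s T) as [->|Hne].
    - apply Hcl; [lra|]. auto.
    - apply Hbelow; lra. }
  destruct (Req_dec T m) as [<-|HneT].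
  - intros eta He. apply HST; lra.
  - exfalso. destruct (Hop T ltac:(lra) (proj2 HST T ltac:(lra))) as [d [Hd Hs]].
    assert (S (Rmin (T + d / 2) m)).
    { pose proof (Rmin_l (T + d/2) m). pose proof (Rmin_r (T + d/2) m).
      split. { split; [|lra]. destruct (Rle_dec (T + d/2) m); [rewrite Rmin_left|rewrite Rmin_right]; lra. }
      intros s Hs'. destruct (Rle_dec s T). { apply HST; lra. } apply Hs. lra. }
    specialize (HT1 _ H). 
    destruct (Rle_dec (T + d/2) m); [rewrite Rmin_left in HT1|rewrite Rmin_right in HT1]; lra.
Qed.


Lemma dmul f g x df dg : derivable_pt_lim f x df -> derivable_pt_lim g x dg ->
  derivable_pt_lim (fun s => f s * g s) x (df * g x + f x * dg).
Proof. intros. apply (derivable_pt_lim_mult f g); auto. Qed.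
Lemma dplus f g x df dg : derivable_pt_lim f x df -> derivable_pt_lim g x dg ->
  derivable_pt_lim (fun s => f s + g s) x (df + dg).
Proof. intros. apply (derivable_pt_lim_plus f g); auto. Qed.
Lemma dminus f g x df dg : derivable_pt_lim f x df -> derivable_pt_lim g x dg ->
  derivable_pt_lim (fun s => f s - g s) x (df - dg).
Proof. intros. apply (derivable_pt_lim_minus f g); auto. Qed.
Lemma dconst c x : derivable_pt_lim (fun _ => c) x 0.
Proof. apply (derivable_pt_lim_const c). Qed.
Lemma dexplin C x : derivable_pt_lim (fun s => exp (- C * s)) x (- C * exp (- C * x)).
Proof.
  replace (- C * exp (- C * x)) with (exp (- C * x) * (- C * 1 + 0 * x)) by ring.
  apply (derivable_pt_lim_comp (fun s => - C * s) exp).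
  - replace (- C * 1 + 0 * x) with (0 * id x + (- C) * 1) by (unfold id; ring).
    apply (derivable_pt_lim_mult (fun _ => - C) id). apply dconst. apply derivable_pt_lim_id.
  - apply derivable_pt_lim_exp.
Qed.
Lemma deq f x d d' : derivable_pt_lim f x d -> d = d' -> derivable_pt_lim f x d'.
Proof. intros H ->; auto. Qed.

Lemma cmul f g x : continuity_pt f x -> continuity_pt g x -> continuity_pt (fun s => f s * g s) x.
Proof. intros. apply (continuity_pt_mult f g); auto. Qed.
Lemma cplus f g x : continuity_pt f x -> continuity_pt g x -> continuity_pt (fun s => f s + g s) x.
Proof. intros. apply (continuity_pt_plus f g); auto. Qed.
Lemma cminus f g x : continuity_pt f x -> continuity_pt g x -> continuity_pt (fun s => f s - g s) x.
Proof. intros. apply (continuity_pt_minus f g); auto. Qed.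
Lemma cconst c x : continuity_pt (fun _ => c) x.
Proof. apply continuity_pt_const. intros a b; auto. Qed.
Lemma cexplin C x : continuity_pt (fun s => exp (- C * s)) x.
Proof. apply derivable_continuous_pt. eexists. apply dexplin. Qed.

Definition goodY l y := (forall z, continuity_pt (Yf y l) z) /\ (forall z, 0 <= Yf y l z <= 1).

Lemma sol_good beta gamma l y dy : 0 < l -> sol_data beta gamma l y dy -> goodY l y.
Proof. intros. split; [eapply sol_Yc|eapply sol_Yr]; eauto. Qed.

Lemma Ecomp beta y1 l1 y2 l2 s : 0 <= beta -> goodY l1 y1 -> goodY l2 y2 -> 0 <= s ->
  (forall z, 0 < z < s -> Yf y2 l2 z <= Yf y1 l1 z) -> Ef beta y2 l2 s <= Ef beta y1 l1 s.
Proof.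
  intros Hb [Hc1 Hr1] [Hc2 Hr2] Hs H. unfold Ef. apply exp_le.
  destruct Hs as [Hs| <-]; [|rewrite !I0; lra].
  destruct (mvt (fun t => If beta y2 l2 t - If beta y1 l1 t) (fun t => kf beta y2 l2 t - kf beta y1 l1 t) 0 s Hs)
    as [c [Hc Heq]].
  - intros c _. apply dminus; apply I_deriv; auto.
  - intros c _. apply derivable_continuous_pt. eexists. apply dminus; apply I_deriv; auto.
  - rewrite !I0 in Heq.
    assert (kf beta y1 l1 c <= kf beta y2 l2 c).
    { unfold kf. specialize (H c Hc). specialize (Hr1 c). specialize (Hr2 c).
      apply Rmult_le_compat_l; [lra|]. apply Rinv_le_contravar; nra. }
    nra.
Qed.

Definition uf beta v := v + beta / 2 * v * v.
Definition Uf beta y l s := uf beta (Yf y l s).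

Lemma uf_diff beta v z : uf beta v - uf beta z = (v - z) * (1 + beta * (v + z) / 2).
Proof. unfold uf; field. Qed.

Lemma uf_mono beta v z : 0 <= beta -> 0 <= v -> 0 <= z -> v < z -> uf beta v < uf beta z.
Proof. intros. assert (uf beta z - uf beta v > 0); [rewrite uf_diff| lra].
  apply Rmult_lt_0_compat; [lra|]. assert (0 <= beta*(z+v)) by (apply Rmult_le_pos; lra). lra. Qed.

Lemma uf_lip beta v z : 0 <= beta -> 0 <= v -> 0 <= z -> Rabs (v - z) <= Rabs (uf beta v - uf beta z).
Proof.
  intros. rewrite uf_diff, Rabs_mult.
  assert (0 <= beta*(v+z)) by (apply Rmult_le_pos; lra).
  rewrite (Rabs_pos_eq (1 + _)) by lra.
  pose proof (Rabs_pos (v - z)). nra.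
Qed.

Lemma uf_up beta v z : 0 <= beta -> 0 <= z <= v -> v <= 1 -> uf beta v - uf beta z <= (1 + beta) * (v - z).
Proof. intros. rewrite uf_diff.
  assert (beta*(v+z) <= beta * 2) by (apply Rmult_le_compat_l; lra).
  assert (0 <= beta*(v+z)) by (apply Rmult_le_pos; lra).
  rewrite (Rmult_comm (1 + beta)). apply Rmult_le_compat_l; lra. Qed.

Lemma Y_deriv2 beta gamma l y dy eta : 0 < l -> 0 <= beta -> sol_data beta gamma l y dy -> 0 < eta < l ->
  derivable_pt_lim (Yf y l) eta (gamma * y 0 * Ef beta y l eta / (1 + beta * Yf y l eta)).
Proof.
  intros Hl Hb Hs He. rewrite <- (rep beta gamma l y dy) by (auto; lra).
  apply Y_deriv; auto. apply Hs.
Qed.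

Lemma U_deriv beta gamma l y dy eta : 0 < l -> 0 <= beta -> sol_data beta gamma l y dy -> 0 < eta < l ->
  derivable_pt_lim (Uf beta y l) eta (gamma * y 0 * Ef beta y l eta).
Proof.
  intros Hl Hb Hs He. pose proof (Y_deriv2 _ _ _ _ _ _ Hl Hb Hs He) as HY.
  pose proof (sol_Yr _ _ _ _ _ Hl Hs eta) as Hr.
  unfold Uf, uf. eapply deq.
  - apply dplus. apply HY. apply dmul. apply dmul. apply dconst. apply HY. apply HY.
  - cbv beta. field. nra.
Qed.

Lemma U_cont beta l y x : goodY l y -> continuity_pt (Uf beta y l) x.
Proof.
  intros [Hc _]. unfold Uf, uf. apply cplus. apply Hc. apply cmul. apply cmul. apply cconst. apply Hc. apply Hc.
Qed.

Lemma Yf0 y l : 0 < l -> Yf y l 0 = y 0.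
Proof. intros. unfold Yf. rewrite clamp_id; auto; lra. Qed.
Lemma Yfl y l : 0 < l -> Yf y l l = y l.
Proof. intros. unfold Yf. rewrite clamp_id; auto; lra. Qed.


Lemma strict_lem beta gamma l1 y1 dy1 l2 y2 dy2 m : 0 < l1 -> 0 < l2 -> 0 <= beta -> 0 < gamma ->
  sol_data beta gamma l1 y1 dy1 -> sol_data beta gamma l2 y2 dy2 ->
  0 < m -> m <= l1 -> m <= l2 -> y2 0 < y1 0 ->
  forall eta, 0 <= eta <= m -> Yf y2 l2 eta < Yf y1 l1 eta.
Proof.
  intros Hl1 Hl2 Hb Hg Hs1 Hs2 Hm Hm1 Hm2 Ha.
  pose proof (sol_good _ _ _ _ _ Hl1 Hs1) as G1. pose proof (sol_good _ _ _ _ _ Hl2 Hs2) as G2.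
  assert (Ha2 : 0 <= y2 0) by (apply Hs2; lra).
  apply CI; [lra| |].
  - intros eta He Hbelow.
    destruct (Req_dec eta 0) as [->|Hne]; [rewrite !Yf0; auto|].
    destruct (mvt (fun s => Uf beta y1 l1 s - Uf beta y2 l2 s)
              (fun s => gamma * y1 0 * Ef beta y1 l1 s - gamma * y2 0 * Ef beta y2 l2 s) 0 eta ltac:(lra))
      as [c [Hc Heq]].
    + intros c Hc. apply dminus; eapply U_deriv; eauto; lra.
    + intros c _. apply cminus; apply U_cont; auto.
    + assert (HE : Ef beta y2 l2 c <= Ef beta y1 l1 c).
      { apply Ecomp; auto; try lra. intros z Hz. left. apply Hbelow. lra. }
      destruct (E_bounds beta y2 l2 c Hb (proj1 G2) (proj2 G2) ltac:(lra)) as [[HE2 _] _].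
      assert (Hd : 0 < gamma * y1 0 * Ef beta y1 l1 c - gamma * y2 0 * Ef beta y2 l2 c).
      { assert (0 < gamma * (y1 0 - y2 0) * Ef beta y2 l2 c).
        { apply Rmult_lt_0_compat; auto. apply Rmult_lt_0_compat; lra. }
        assert (gamma * y1 0 * Ef beta y2 l2 c <= gamma * y1 0 * Ef beta y1 l1 c).
        { apply Rmult_le_compat_l; auto. apply Rmult_le_pos; lra. }
        nra. }
      assert (HW0 : Uf beta y2 l2 0 < Uf beta y1 l1 0).
      { unfold Uf. rewrite !Yf0 by auto. apply uf_mono; auto; lra. }
      assert (HW : Uf beta y2 l2 eta < Uf beta y1 l1 eta) by nra.
      destruct (Rlt_or_le (Yf y2 l2 eta) (Yf y1 l1 eta)) as [h|h]; auto.
      exfalso. unfold Uf in HW. destruct G1 as [_ R1]. destruct G2 as [_ R2].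
      destruct h as [h|h].
      * pose proof (uf_mono beta _ _ Hb (proj1 (R1 eta)) (proj1 (R2 eta)) h). lra.
      * rewrite h in HW. lra.
  - intros eta He HP.
    destruct G1 as [C1 _]. destruct G2 as [C2 _].
    set (e := (Yf y1 l1 eta - Yf y2 l2 eta) / 2).
    assert (He' : 0 < e) by (unfold e; lra).
    destruct (cont_eps_inv _ _ (C1 eta) e He') as [d1 [Hd1 H1]].
    destruct (cont_eps_inv _ _ (C2 eta) e He') as [d2 [Hd2 H2]].
    exists (Rmin d1 d2). split; [apply Rmin_pos; auto|].
    intros s Hs. pose proof (Rmin_l d1 d2). pose proof (Rmin_r d1 d2).
    assert (Rabs (s - eta) < d1) by (rewrite Rabs_pos_eq; lra).
    assert (Rabs (s - eta) < d2) by (rewrite Rabs_pos_eq; lra).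
    specialize (H1 s ltac:(auto)). specialize (H2 s ltac:(auto)).
    apply Rabs_def2 in H1. apply Rabs_def2 in H2. unfold e in *. lra.
Qed.


Lemma energy_ineq v w d E2 k1 a g B : 0 <= k1 -> 0 < E2 <= 1 -> Rabs d <= B * Rabs w -> 0 <= B ->
  0 <= a <= 1 -> 0 < g ->
  2 * v * (- k1 * v + d * E2) + 2 * w * (g * a * v) <= (B + g) * (v * v + w * w).
Proof.
  intros Hk HE Hd HB Ha Hg.
  assert (H1 : v * d * E2 <= Rabs v * Rabs d).
  { apply Rle_trans with (Rabs (v * d * E2)); [apply RRle_abs|].
    rewrite !Rabs_mult. rewrite (Rabs_pos_eq E2) by lra.
    apply Rle_trans with (Rabs v * Rabs d * 1); [|lra].
    apply Rmult_le_compat_l; [apply Rmult_le_pos; apply Rabs_pos| lra]. }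
  assert (H2 : a * w * v <= Rabs v * Rabs w).
  { apply Rle_trans with (Rabs (a * w * v)); [apply RRle_abs|].
    rewrite !Rabs_mult. rewrite (Rabs_pos_eq a) by lra.
    rewrite (Rmult_comm (Rabs v)). rewrite Rmult_assoc.
    apply Rle_trans with (1 * (Rabs w * Rabs v)); [|lra].
    apply Rmult_le_compat_r; [apply Rmult_le_pos; apply Rabs_pos| lra]. }
  assert (H3 : Rabs v * Rabs d <= B * (Rabs v * Rabs w)).
  { pose proof (Rabs_pos v). nra. }
  assert (H4 : 2 * (Rabs v * Rabs w) <= v * v + w * w).
  { pose proof (Rle_0_sqr (Rabs v - Rabs w)) as H. unfold Rsqr in H.
    assert (Rabs v * Rabs v = v * v) by (rewrite <- Rabs_mult; apply Rabs_pos_eq; nra).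
    assert (Rabs w * Rabs w = w * w) by (rewrite <- Rabs_mult; apply Rabs_pos_eq; nra).
    nra. }
  assert (0 <= k1 * v * v) by (rewrite Rmult_assoc; apply Rmult_le_pos; [lra| pose proof (Rle_0_sqr v) as Hs; unfold Rsqr in Hs; lra]).
  nra.
Qed.

Lemma kdiff beta y1 l1 y2 l2 c m : 0 <= beta -> goodY l1 y1 -> goodY l2 y2 -> 0 < c <= m ->
  Rabs (kf beta y2 l2 c - kf beta y1 l1 c) <= 2 * m * beta * Rabs (Uf beta y1 l1 c - Uf beta y2 l2 c).
Proof.
  intros Hb [_ R1] [_ R2] Hc. specialize (R1 c). specialize (R2 c).
  set (Y1 := Yf y1 l1 c) in *. set (Y2 := Yf y2 l2 c) in *.
  assert (Hp1 : 1 <= 1 + beta * Y1) by nra. assert (Hp2 : 1 <= 1 + beta * Y2) by nra.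
  assert (E : kf beta y2 l2 c - kf beta y1 l1 c = 2 * c * beta * (Y1 - Y2) / ((1 + beta * Y1) * (1 + beta * Y2))).
  { unfold kf. fold Y1 Y2. field. lra. }
  rewrite E. unfold Uf. fold Y1 Y2.
  pose proof (uf_lip beta Y1 Y2 Hb ltac:(lra) ltac:(lra)).
  assert (Hq : 1 <= (1 + beta * Y1) * (1 + beta * Y2)) by nra.
  unfold Rdiv. rewrite (Rabs_mult (2 * c * beta * (Y1 - Y2))), (Rabs_mult (2 * c * beta)).
  rewrite (Rabs_pos_eq (2 * c * beta)) by (apply Rmult_le_pos; lra).
  rewrite Rabs_inv, (Rabs_pos_eq ((1 + beta * Y1) * (1 + beta * Y2))) by lra.
  assert (0 < / ((1 + beta * Y1) * (1 + beta * Y2)) <= 1).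
  { split. apply Rinv_0_lt_compat; lra. rewrite <- Rinv_1. apply Rinv_le_contravar; lra. }
  pose proof (Rabs_pos (Y1 - Y2)).
  assert (0 <= 2 * c * beta) by (apply Rmult_le_pos; lra).
  assert (2 * c * beta <= 2 * m * beta) by (apply Rmult_le_compat_r; lra).
  assert (2 * c * beta * Rabs (Y1 - Y2) * / ((1 + beta * Y1) * (1 + beta * Y2)) <= 2 * c * beta * Rabs (Y1 - Y2)).
  { pose proof (Rmult_le_pos _ _ H2 H1) as HH. apply Rle_trans with (2*c*beta*Rabs(Y1-Y2)*1); [apply Rmult_le_compat_l; lra| lra]. }
  pose proof (Rmult_le_compat _ _ _ _ H2 H1 H3 H). lra.
Qed.


Lemma uniq_lem beta gamma l1 y1 dy1 l2 y2 dy2 m : 0 < l1 -> 0 < l2 -> 0 <= beta -> 0 < gamma ->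
  sol_data beta gamma l1 y1 dy1 -> sol_data beta gamma l2 y2 dy2 ->
  0 < m -> m <= l1 -> m <= l2 -> y2 0 = y1 0 ->
  forall eta, 0 <= eta <= m -> Yf y2 l2 eta = Yf y1 l1 eta.
Proof.
  intros Hl1 Hl2 Hb Hg Hs1 Hs2 Hm Hm1 Hm2 Ha.
  pose proof (sol_good _ _ _ _ _ Hl1 Hs1) as G1. pose proof (sol_good _ _ _ _ _ Hl2 Hs2) as G2.
  assert (Ha2 : 0 <= y2 0 <= 1) by (apply Hs2; lra).
  set (E1 := Ef beta y1 l1). set (E2 := Ef beta y2 l2).
  set (U1 := Uf beta y1 l1). set (U2 := Uf beta y2 l2).
  set (C := 2 * m * beta + gamma).
  set (Z := fun s => ((E1 s - E2 s) * (E1 s - E2 s) + (U1 s - U2 s) * (U1 s - U2 s)) * exp (- C * s)).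
  intros eta He.
  destruct (Req_dec eta 0) as [->|Hne]; [rewrite !Yf0; auto|].
  assert (HdE1 : forall c, derivable_pt_lim E1 c (- kf beta y1 l1 c * E1 c)) by (intros; apply E_deriv; [auto|apply G1|apply G1]).
  assert (HdE2 : forall c, derivable_pt_lim E2 c (- kf beta y2 l2 c * E2 c)) by (intros; apply E_deriv; [auto|apply G2|apply G2]).
  assert (HcE1 : forall c, continuity_pt E1 c) by (intros; apply derivable_continuous_pt; eexists; apply HdE1).
  assert (HcE2 : forall c, continuity_pt E2 c) by (intros; apply derivable_continuous_pt; eexists; apply HdE2).
  destruct (mvt Z (fun c =>
     ((( - kf beta y1 l1 c * E1 c - - kf beta y2 l2 c * E2 c) * (E1 c - E2 c) +
       (E1 c - E2 c) * ( - kf beta y1 l1 c * E1 c - - kf beta y2 l2 c * E2 c)) +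
      ((gamma * y1 0 * E1 c - gamma * y2 0 * E2 c) * (U1 c - U2 c) +
       (U1 c - U2 c) * (gamma * y1 0 * E1 c - gamma * y2 0 * E2 c))) * exp (- C * c) +
     ((E1 c - E2 c) * (E1 c - E2 c) + (U1 c - U2 c) * (U1 c - U2 c)) * (- C * exp (- C * c)))
     0 eta ltac:(lra)) as [c [Hc Heq]].
  - intros c Hc. unfold Z.
    apply (dmul (fun s => (E1 s - E2 s) * (E1 s - E2 s) + (U1 s - U2 s) * (U1 s - U2 s)) (fun s => exp (- C * s))); [|apply dexplin].
    apply (dplus (fun s => (E1 s - E2 s) * (E1 s - E2 s)) (fun s => (U1 s - U2 s) * (U1 s - U2 s))).
    + apply (dmul (fun s => E1 s - E2 s) (fun s => E1 s - E2 s)); apply (dminus E1 E2); auto.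
    + apply (dmul (fun s => U1 s - U2 s) (fun s => U1 s - U2 s)); apply (dminus U1 U2); eapply U_deriv; eauto; lra.
  - intros c _. unfold Z.
    apply (cmul (fun s => (E1 s - E2 s) * (E1 s - E2 s) + (U1 s - U2 s) * (U1 s - U2 s)) (fun s => exp (- C * s))); [|apply cexplin].
    apply (cplus (fun s => (E1 s - E2 s) * (E1 s - E2 s)) (fun s => (U1 s - U2 s) * (U1 s - U2 s))).
    + apply (cmul (fun s => E1 s - E2 s) (fun s => E1 s - E2 s)); apply (cminus E1 E2); auto.
    + apply (cmul (fun s => U1 s - U2 s) (fun s => U1 s - U2 s)); apply (cminus U1 U2); apply U_cont; auto.
  - assert (HZ0 : Z 0 = 0).
    { unfold Z, E1, E2, U1, U2, Uf. rewrite !E0, !Yf0, Ha by auto. ring. }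
    assert (Hk1 := k_bounds beta y1 l1 c Hb (proj2 G1) ltac:(lra)).
    assert (Hkd := kdiff beta y1 l1 y2 l2 c m Hb G1 G2 ltac:(lra)).
    destruct (E_bounds beta y2 l2 c Hb (proj1 G2) (proj2 G2) ltac:(lra)) as [HE2 _].
    pose proof (energy_ineq (E1 c - E2 c) (U1 c - U2 c) (kf beta y2 l2 c - kf beta y1 l1 c) (E2 c)
      (kf beta y1 l1 c) (y1 0) gamma (2 * m * beta) ltac:(lra) HE2 Hkd) as Hen.
    assert (0 <= 2 * m * beta) by (apply Rmult_le_pos; lra).
    specialize (Hen ltac:(lra) ltac:(rewrite <- Ha; lra) Hg).
    pose proof (exp_pos (- C * c)) as Hex.
    set (v := E1 c - E2 c) in *. set (w := U1 c - U2 c) in *.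
    assert (Hder : ((( - kf beta y1 l1 c * E1 c - - kf beta y2 l2 c * E2 c) * v +
       v * ( - kf beta y1 l1 c * E1 c - - kf beta y2 l2 c * E2 c)) +
      ((gamma * y1 0 * E1 c - gamma * y2 0 * E2 c) * w +
       w * (gamma * y1 0 * E1 c - gamma * y2 0 * E2 c))) * exp (- C * c) +
     (v * v + w * w) * (- C * exp (- C * c)) <= 0).
    { replace ((( - kf beta y1 l1 c * E1 c - - kf beta y2 l2 c * E2 c) * v +
       v * ( - kf beta y1 l1 c * E1 c - - kf beta y2 l2 c * E2 c)) +
      ((gamma * y1 0 * E1 c - gamma * y2 0 * E2 c) * w +
       w * (gamma * y1 0 * E1 c - gamma * y2 0 * E2 c))) with
      (2 * v * (- kf beta y1 l1 c * v + (kf beta y2 l2 c - kf beta y1 l1 c) * E2 c) + 2 * w * (gamma * y1 0 * v))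
      by (unfold v; rewrite Ha; ring).
      fold C in Hen. nra. }
    rewrite HZ0 in Heq.
    assert (HZe : Z eta <= 0) by nra.
    unfold Z in HZe. pose proof (exp_pos (- C * eta)).
    assert (HV : (E1 eta - E2 eta) * (E1 eta - E2 eta) + (U1 eta - U2 eta) * (U1 eta - U2 eta) <= 0) by nra.
    assert (Hw : U1 eta - U2 eta = 0).
    { pose proof (Rle_0_sqr (E1 eta - E2 eta)). pose proof (Rle_0_sqr (U1 eta - U2 eta)). unfold Rsqr in *.
      assert (HH : (U1 eta - U2 eta) * (U1 eta - U2 eta) = 0) by lra.
      apply Rmult_integral in HH. destruct HH; auto. }
    pose proof (uf_lip beta (Yf y1 l1 eta) (Yf y2 l2 eta) Hb (proj1 (proj2 G1 eta)) (proj1 (proj2 G2 eta))) as HL.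
    unfold U1, U2, Uf in Hw. rewrite Hw, Rabs_R0 in HL.
    pose proof (Rabs_pos (Yf y1 l1 eta - Yf y2 l2 eta)).
    assert (HH : Rabs (Yf y1 l1 eta - Yf y2 l2 eta) = 0) by lra.
    apply Rabs_eq_0 in HH. lra.
Qed.


Lemma order_lem beta gamma l1 y1 dy1 l2 y2 dy2 : 0 < l1 -> l1 < l2 -> 0 <= beta -> 0 < gamma ->
  sol_data beta gamma l1 y1 dy1 -> sol_data beta gamma l2 y2 dy2 ->
  y2 0 <= y1 0 /\ forall s, 0 <= s <= l1 -> Yf y2 l2 s <= Yf y1 l1 s.
Proof.
  intros Hl1 Hl12 Hb Hg Hs1 Hs2.
  destruct (Rtotal_order (y1 0) (y2 0)) as [h|[h|h]].
  - exfalso.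
    pose proof (strict_lem beta gamma l2 y2 dy2 l1 y1 dy1 l1 ltac:(lra) Hl1 Hb Hg Hs2 Hs1 Hl1 ltac:(lra) ltac:(lra) h l1 ltac:(lra)) as H.
    rewrite Yfl in H by auto. destruct Hs1 as [_ [_ [_ [_ Hend]]]]. rewrite Hend in H.
    pose proof (sol_Yr beta gamma l2 y2 dy2 ltac:(lra) Hs2 l1). lra.
  - split; [lra|]. intros s Hs. right.
    destruct (Req_dec s 0) as [->|hs]; [rewrite !Yf0 by lra; lra|].
    apply (uniq_lem beta gamma l1 y1 dy1 l2 y2 dy2 l1); auto; lra.
  - split; [lra|]. intros s Hs. left.
    apply (strict_lem beta gamma l1 y1 dy1 l2 y2 dy2 l1); auto; lra.
Qed.

Definition Pf beta gamma y l s := gamma * y 0 * Ef beta y l s.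

Lemma P_deriv beta gamma y l x : 0 <= beta -> goodY l y ->
  derivable_pt_lim (Pf beta gamma y l) x (- kf beta y l x * Pf beta gamma y l x).
Proof.
  intros Hb [Hc Hr]. unfold Pf. eapply deq.
  - apply (dmul (fun _ => gamma * y 0) (Ef beta y l)). apply dconst. apply E_deriv; auto.
  - ring.
Qed.

Lemma P_bounds beta gamma l y dy x : 0 < l -> 0 <= beta -> 0 < gamma -> sol_data beta gamma l y dy -> 0 <= x ->
  0 <= Pf beta gamma y l x <= gamma.
Proof.
  intros Hl Hb Hg Hs Hx. pose proof (sol_good _ _ _ _ _ Hl Hs) as [Hc Hr].
  destruct (E_bounds beta y l x Hb Hc Hr Hx) as [[HE1 HE2] _].
  assert (Ha : 0 <= y 0 <= 1) by (apply Hs; lra).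
  unfold Pf. split.
  - apply Rmult_le_pos; [apply Rmult_le_pos|]; lra.
  - apply Rle_trans with (gamma * 1 * 1); [|lra].
    apply Rmult_le_compat; try lra. apply Rmult_le_pos; lra. apply Rmult_le_compat_l; lra.
Qed.

Lemma P_lip beta gamma l y dy x1 x2 L : 0 < l -> 0 <= beta -> 0 < gamma -> sol_data beta gamma l y dy ->
  0 <= x1 <= x2 -> x2 <= L ->
  0 <= Pf beta gamma y l x1 - Pf beta gamma y l x2 <= 2 * L * gamma * (x2 - x1).
Proof.
  intros Hl Hb Hg Hs Hx HL. pose proof (sol_good _ _ _ _ _ Hl Hs) as G.
  destruct (Req_dec x1 x2) as [<-|hne]; [lra|].
  destruct (mvt (Pf beta gamma y l) (fun s => - kf beta y l s * Pf beta gamma y l s) x1 x2 ltac:(lra)) as [c [Hc Heq]].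
  - intros; apply P_deriv; auto.
  - intros; apply derivable_continuous_pt; eexists; apply P_deriv; auto.
  - pose proof (k_bounds beta y l c Hb (proj2 G) ltac:(lra)).
    pose proof (P_bounds beta gamma l y dy c Hl Hb Hg Hs ltac:(lra)).
    assert (0 <= kf beta y l c * Pf beta gamma y l c <= 2 * L * gamma).
    { split. apply Rmult_le_pos; lra. apply Rmult_le_compat; lra. }
    nra.
Qed.


Lemma uf_mono_le beta v z : 0 <= beta -> 0 <= v -> 0 <= z -> v <= z -> uf beta v <= uf beta z.
Proof. intros ? ? ? [h| ->]; [left; apply uf_mono; auto| lra]. Qed.

Lemma pair_est beta gamma l1 y1 dy1 l2 y2 dy2 L t : 0 < l1 -> l1 < l2 -> l2 <= L -> 0 <= beta -> 0 < gamma ->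
  sol_data beta gamma l1 y1 dy1 -> sol_data beta gamma l2 y2 dy2 -> 0 < t <= l1 ->
  0 <= Pf beta gamma y1 l1 l1 - Pf beta gamma y2 l2 l2 <=
    (1 + beta) * gamma * (l2 - l1) / t + 4 * L * gamma * t + 2 * L * gamma * (l2 - l1).
Proof.
  intros Hl1 Hl12 HL Hb Hg Hs1 Hs2 Ht.
  pose proof (sol_good _ _ _ _ _ Hl1 Hs1) as G1. pose proof (sol_good beta gamma l2 y2 dy2 ltac:(lra) Hs2) as G2.
  destruct (order_lem beta gamma l1 y1 dy1 l2 y2 dy2 Hl1 Hl12 Hb Hg Hs1 Hs2) as [Ha Hord].
  assert (Ha2 : 0 <= y2 0 <= 1) by (apply Hs2; lra).
  assert (Ha1 : 0 <= y1 0 <= 1) by (apply Hs1; lra).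
  set (P1 := Pf beta gamma y1 l1). set (P2 := Pf beta gamma y2 l2).
  assert (HPord : forall s, 0 <= s <= l1 -> P2 s <= P1 s).
  { intros s Hs. unfold P1, P2, Pf.
    assert (HE : Ef beta y2 l2 s <= Ef beta y1 l1 s).
    { apply Ecomp; auto; try lra. intros z Hz. apply Hord. lra. }
    destruct (E_bounds beta y2 l2 s Hb (proj1 G2) (proj2 G2) ltac:(lra)) as [[HE2 _] _].
    apply Rle_trans with (gamma * y1 0 * Ef beta y2 l2 s).
    - apply Rmult_le_compat_r; [lra|]. apply Rmult_le_compat_l; lra.
    - apply Rmult_le_compat_l; [apply Rmult_le_pos|]; lra. }
  destruct (P_lip beta gamma l2 y2 dy2 l1 l2 L ltac:(lra) Hb Hg Hs2 ltac:(lra) HL) as [Hf1 Hf2].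
  fold P2 in Hf1, Hf2.
  assert (Hb1 : 1 - Yf y2 l2 l1 <= gamma * (l2 - l1)).
  { destruct (mvt (Yf y2 l2) (fun s => gamma * y2 0 * Ef beta y2 l2 s / (1 + beta * Yf y2 l2 s)) l1 l2 Hl12)
      as [c [Hc Heq]].
    - intros c Hc. apply Y_deriv2 with dy2; auto; lra.
    - intros c _. apply G2.
    - rewrite Yfl in Heq by lra. destruct Hs2 as [_ [_ [_ [_ Hend]]]]. rewrite Hend in Heq.
      destruct (E_bounds beta y2 l2 c Hb (proj1 G2) (proj2 G2) ltac:(lra)) as [[HE1 HE2] _].
      pose proof (proj2 G2 c).
      assert (gamma * y2 0 * Ef beta y2 l2 c / (1 + beta * Yf y2 l2 c) <= gamma).
      { apply Rle_trans with (gamma * y2 0 * Ef beta y2 l2 c / 1).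
        - apply Rmult_le_compat_l. apply Rmult_le_pos; [apply Rmult_le_pos|]; lra.
          apply Rinv_le_contravar; nra.
        - rewrite Rdiv_1_r. apply Rle_trans with (gamma * 1 * 1); [|lra].
          apply Rmult_le_compat; try lra. apply Rmult_le_pos; lra. apply Rmult_le_compat_l; lra. }
      nra. }
  set (w := fun s => Uf beta y1 l1 s - Uf beta y2 l2 s).
  assert (Hw1 : w l1 <= (1 + beta) * gamma * (l2 - l1)).
  { unfold w, Uf. rewrite Yfl by lra. destruct Hs1 as [_ [_ [_ [_ Hend]]]]. rewrite Hend.
    pose proof (proj2 G2 l1).
    pose proof (uf_up beta 1 (Yf y2 l2 l1) Hb ltac:(lra) ltac:(lra)).
    assert (0 <= 1 + beta) by lra. nra. }
  assert (Hw0 : 0 <= w (l1 - t)).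
  { unfold w, Uf. pose proof (Hord (l1 - t) ltac:(lra)).
    pose proof (uf_mono_le beta _ _ Hb (proj1 (proj2 G2 (l1 - t))) (proj1 (proj2 G1 (l1 - t))) H). lra. }
  destruct (mvt w (fun s => P1 s - P2 s) (l1 - t) l1 ltac:(lra)) as [xi [Hxi Heqw]].
  { intros c Hc. unfold w, P1, P2, Pf. apply dminus; eapply U_deriv; eauto; lra. }
  { intros c _. unfold w. apply cminus; apply U_cont; auto. }
  destruct (mvt (fun s => P1 s - P2 s) (fun s => - kf beta y1 l1 s * P1 s - - kf beta y2 l2 s * P2 s) xi l1 ltac:(lra))
    as [z [Hz Heqq]].
  { intros c Hc. apply dminus; apply P_deriv; auto. }
  { intros c _. apply cminus; apply derivable_continuous_pt; eexists; apply P_deriv; auto. }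
  pose proof (k_bounds beta y1 l1 z Hb (proj2 G1) ltac:(lra)).
  pose proof (k_bounds beta y2 l2 z Hb (proj2 G2) ltac:(lra)).
  pose proof (P_bounds beta gamma l1 y1 dy1 z Hl1 Hb Hg Hs1 ltac:(lra)).
  pose proof (P_bounds beta gamma l2 y2 dy2 z ltac:(lra) Hb Hg Hs2 ltac:(lra)).
  fold P1 P2 in H1, H2.
  assert (Hq' : Rabs (- kf beta y1 l1 z * P1 z - - kf beta y2 l2 z * P2 z) <= 4 * L * gamma).
  { assert (0 <= kf beta y1 l1 z * P1 z <= 2 * L * gamma).
    { split. apply Rmult_le_pos; lra. apply Rmult_le_compat; lra. }
    assert (0 <= kf beta y2 l2 z * P2 z <= 2 * L * gamma).
    { split. apply Rmult_le_pos; lra. apply Rmult_le_compat; lra. }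
    apply Rabs_le. lra. }
  apply Rabs_le_between in Hq'.
  assert (Hq1 : P1 l1 - P2 l1 <= P1 xi - P2 xi + 4 * L * gamma * t).
  { assert ((- kf beta y1 l1 z * P1 z - - kf beta y2 l2 z * P2 z) * (l1 - xi) <= 4 * L * gamma * t).
    { apply Rle_trans with (4 * L * gamma * (l1 - xi)).
      - apply Rmult_le_compat_r; lra.
      - apply Rmult_le_compat_l; [|lra]. assert (0 <= L * gamma) by (apply Rmult_le_pos; lra). lra. }
    lra. }
  assert (Hq2 : P1 xi - P2 xi <= (1 + beta) * gamma * (l2 - l1) / t).
  { replace (l1 - (l1 - t)) with t in Heqw by ring.
    apply Rmult_le_reg_r with t; [lra|]. unfold Rdiv. rewrite Rmult_assoc, Rinv_l, Rmult_1_r by lra.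
    lra. }
  pose proof (HPord l1 ltac:(lra)).
  split; lra.
Qed.


Lemma hcont (h : R -> R) x A B : 0 < x -> 0 < A -> 0 < B ->
  (forall l1 l2 t, x / 2 <= l1 -> l1 < l2 -> l2 <= 2 * x -> 0 < t <= l1 ->
     Rabs (h l1 - h l2) <= A * (l2 - l1) / t + B * t + B * (l2 - l1)) ->
  continuity_pt h x.
Proof.
  intros Hx HA HB Hp. apply cont_eps. intros eps Heps.
  set (t := Rmin (x / 2) (eps / (3 * B))).
  assert (Ht : 0 < t) by (apply Rmin_pos; [lra| apply Rdiv_lt_0_compat; lra]).
  assert (Ht1 : t <= x / 2) by apply Rmin_l.
  assert (Ht2 : B * t <= eps / 3).
  { pose proof (Rmin_r (x/2) (eps / (3 * B))). fold t in H.
    apply Rle_trans with (B * (eps / (3 * B))). apply Rmult_le_compat_l; lra. right; field; lra. }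
  set (d := Rmin (x / 2) (Rmin (eps * t / (3 * A)) (eps / (3 * B)))).
  assert (Hd : 0 < d).
  { apply Rmin_pos; [lra|]. apply Rmin_pos; apply Rdiv_lt_0_compat; try lra. apply Rmult_lt_0_compat; lra. }
  exists d. split; auto. intros z Hz.
  pose proof (Rmin_l (x / 2) (Rmin (eps * t / (3 * A)) (eps / (3 * B)))).
  pose proof (Rmin_r (x / 2) (Rmin (eps * t / (3 * A)) (eps / (3 * B)))).
  pose proof (Rmin_l (eps * t / (3 * A)) (eps / (3 * B))).
  pose proof (Rmin_r (eps * t / (3 * A)) (eps / (3 * B))). fold d in H, H0.
  assert (key : forall e, 0 <= e < d -> A * e / t + B * t + B * e < eps).
  { intros e He.
    assert (A * e / t < eps / 3).
    { apply Rmult_lt_reg_r with t; auto. unfold Rdiv. rewrite Rmult_assoc, Rinv_l, Rmult_1_r by lra.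
      apply Rlt_le_trans with (A * (eps * t / (3 * A))).
      - apply Rmult_lt_compat_l; lra.
      - right. field; lra. }
    assert (B * e < eps / 3).
    { apply Rlt_le_trans with (B * (eps / (3 * B))). apply Rmult_lt_compat_l; lra. right; field; lra. }
    lra. }
  destruct (Rtotal_order z x) as [hz|[hz|hz]].
  - rewrite Rabs_left in Hz by lra.
    specialize (Hp z x t ltac:(lra) hz ltac:(lra) ltac:(lra)).
    specialize (key (x - z) ltac:(lra)). lra.
  - subst. unfold Rminus. rewrite Rplus_opp_r, Rabs_R0. lra.
  - rewrite Rabs_pos_eq in Hz by lra.
    specialize (Hp x z t ltac:(lra) hz ltac:(lra) ltac:(lra)).
    specialize (key (z - x) ltac:(lra)). rewrite Rabs_minus_sym. lra.
Qed.


Lemma D_le beta gamma l y dy c : 0 < l -> 0 <= beta -> 0 < gamma -> sol_data beta gamma l y dy -> 0 <= c ->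
  gamma * y 0 * Ef beta y l c / (1 + beta * Yf y l c) <= gamma.
Proof.
  intros Hl Hb Hg Hs Hc. pose proof (sol_good _ _ _ _ _ Hl Hs) as G.
  assert (Ha : 0 <= y 0 <= 1) by (apply Hs; lra).
  destruct (E_bounds beta y l c Hb (proj1 G) (proj2 G) Hc) as [[HE1 HE2] _].
  pose proof (proj2 G c).
  apply Rle_trans with (gamma * y 0 * Ef beta y l c / 1).
  - apply Rmult_le_compat_l. apply Rmult_le_pos; [apply Rmult_le_pos|]; lra.
    apply Rinv_le_contravar; nra.
  - rewrite Rdiv_1_r. apply Rle_trans with (gamma * 1 * 1); [|lra].
    apply Rmult_le_compat; try lra. apply Rmult_le_pos; lra. apply Rmult_le_compat_l; lra.
Qed.

Lemma h_small beta gamma l y dy : 0 < l -> 0 <= beta -> 0 < gamma -> sol_data beta gamma l y dy ->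
  gamma * (1 - gamma * l) * (1 - l * l) <= Pf beta gamma y l l \/ 1 - gamma * l < 0 \/ 1 - l * l < 0.
Proof.
  intros Hl Hb Hg Hs. pose proof (sol_good _ _ _ _ _ Hl Hs) as G.
  destruct (Rlt_or_le (1 - gamma * l) 0) as [h|h1]; [right; left; auto|].
  destruct (Rlt_or_le (1 - l * l) 0) as [h|h2]; [right; right; auto|].
  left.
  assert (Ha : 1 - gamma * l <= y 0).
  { destruct (mvt (Yf y l) (fun s => gamma * y 0 * Ef beta y l s / (1 + beta * Yf y l s)) 0 l Hl)
      as [c [Hc Heq]].
    - intros c Hc. apply Y_deriv2 with dy; auto.
    - intros c _. apply G.
    - pose proof (D_le beta gamma l y dy c Hl Hb Hg Hs ltac:(lra)).
      rewrite Yfl, Yf0 in Heq by lra. destruct Hs as [_ [_ [_ [_ Hend]]]]. rewrite Hend in Heq. nra. }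
  destruct (E_bounds beta y l l Hb (proj1 G) (proj2 G) ltac:(lra)) as [_ HE].
  unfold Pf. apply Rmult_le_compat; try lra.
  apply Rmult_le_pos; lra. apply Rmult_le_compat_l; lra.
Qed.


Theorem theorem3p12
  (gamma beta1 beta Ste : R) (phi : R -> R -> R)
  (hgamma : 0 < gamma)
  (hbeta1 : 0 < beta1 /\
     sqrt PI / 2 * gamma * beta1 * sqrt (1 + beta1) * (3 + beta1) = 1)
  (hbeta : 0 <= beta < beta1)
  (hSte : 0 < Ste)
  (hphi : forall lam, 0 < lam ->
     is_sol beta gamma lam (phi lam) /\
     forall h, is_sol beta gamma lam h ->
       forall eta, 0 <= eta <= lam -> h eta = phi lam eta) :
  exists lam, 0 < lam /\
    exists dphi : R -> R,
      deriv_on_closed (phi lam) dphi 0 lam /\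
      dphi lam / lam = 2 / ((1 + beta) * Ste).
Proof.
  destruct hbeta as [Hb _].
  assert (Hsol : forall lam, 0 < lam -> exists dy, sol_data beta gamma lam (phi lam) dy).
  { intros lam Hl. destruct (hphi lam Hl) as [[_ [_ [Hr [dy [Hd [Ho [Hbc He]]]]]]] _].
    exists dy. exact (conj Hr (conj Hd (conj Ho (conj Hbc He)))). }
  set (h := fun lam => Pf beta gamma (phi lam) lam lam).
  assert (Hc : forall x, 0 < x -> continuity_pt h x).
  { intros x Hx. apply (hcont h x ((1 + beta) * gamma) (4 * (2 * x) * gamma)); auto.
    - apply Rmult_lt_0_compat; lra.
    - apply Rmult_lt_0_compat; lra.
    - intros l1 l2 t H1 H12 H2 Ht.
      destruct (Hsol l1 ltac:(lra)) as [dy1 Hs1]. destruct (Hsol l2 ltac:(lra)) as [dy2 Hs2].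
      pose proof (pair_est beta gamma l1 (phi l1) dy1 l2 (phi l2) dy2 (2 * x) t ltac:(lra) H12 H2 Hb hgamma Hs1 Hs2 Ht) as HP.
      unfold h. rewrite Rabs_pos_eq by lra.
      assert (2 * (2 * x) * gamma * (l2 - l1) <= 4 * (2 * x) * gamma * (l2 - l1)).
      { apply Rmult_le_compat_r; [lra|]. apply Rmult_le_compat_r; lra. }
      lra. }
  set (a := Rmin (1/2) (Rmin (1 / (2 * gamma)) (gamma * Ste / 8))).
  assert (Ha0 : 0 < a).
  { apply Rmin_pos; [lra|]. apply Rmin_pos; apply Rdiv_lt_0_compat; try lra. apply Rmult_lt_0_compat; lra. }
  pose proof (Rmin_l (1/2) (Rmin (1 / (2 * gamma)) (gamma * Ste / 8))) as Ha1.
  pose proof (Rmin_r (1/2) (Rmin (1 / (2 * gamma)) (gamma * Ste / 8))) as Ha'.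
  pose proof (Rmin_l (1 / (2 * gamma)) (gamma * Ste / 8)) as Ha2.
  pose proof (Rmin_r (1 / (2 * gamma)) (gamma * Ste / 8)) as Ha3. fold a in Ha1, Ha'.
  set (b := a + gamma * Ste).
  assert (Hbg : 0 < gamma * Ste) by (apply Rmult_lt_0_compat; lra).
  set (f := fun lam => 2 / Ste - h lam / lam).
  assert (Hfa : f a < 0).
  { destruct (Hsol a Ha0) as [dy Hs].
    assert (Hga : gamma * a <= 1/2).
    { apply Rle_trans with (gamma * (1 / (2 * gamma))). apply Rmult_le_compat_l; lra. right; field; lra. }
    assert (Haa : a * a <= 1/4) by nra.
    destruct (h_small beta gamma a (phi a) dy Ha0 Hb hgamma Hs) as [H|[H|H]]; try lra.
    assert (Hh : 3 * gamma / 8 <= h a).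
    { unfold h. apply Rle_trans with (gamma * (1 - gamma * a) * (1 - a * a)); auto.
      apply Rle_trans with (gamma * (1/2) * (3/4)); [lra|].
      apply Rmult_le_compat; try lra; nra. }
    unfold f. assert (2 / Ste < h a / a); [|lra].
    apply Rmult_lt_reg_r with (a * Ste). apply Rmult_lt_0_compat; lra.
    replace (2 / Ste * (a * Ste)) with (2 * a) by (field; lra).
    replace (h a / a * (a * Ste)) with (h a * Ste) by (field; lra).
    assert (3 * gamma / 8 * Ste <= h a * Ste) by (apply Rmult_le_compat_r; lra).
    assert (3 * a <= 3 * gamma / 8 * Ste) by lra. lra. }
  assert (Hfb : 0 < f b).
  { destruct (Hsol b ltac:(unfold b; lra)) as [dy Hs].
    pose proof (P_bounds beta gamma b (phi b) dy b ltac:(unfold b; lra) Hb hgamma Hs ltac:(unfold b; lra)).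
    fold (h b) in H.
    unfold f. assert (h b / b < 2 / Ste); [|lra].
    apply Rmult_lt_reg_r with (b * Ste). apply Rmult_lt_0_compat; unfold b; lra.
    replace (2 / Ste * (b * Ste)) with (2 * b) by (field; unfold b; lra).
    replace (h b / b * (b * Ste)) with (h b * Ste) by (field; unfold b; lra).
    assert (h b * Ste <= gamma * Ste) by (apply Rmult_le_compat_r; lra).
    assert (b = a + gamma * Ste) by reflexivity. lra. }
  destruct (Ranalysis5.IVT_interv f a b) as [z [Hz Hfz]].
  { intros x Hx. unfold f. apply cminus. apply cconst.
    apply (continuity_pt_div h id). apply Hc; lra. apply derivable_continuous_pt, derivable_pt_id.
    unfold id; lra. }
  { unfold b; lra. }
  { auto. }
  { auto. }
  exists z. split; [lra|].
  destruct (Hsol z ltac:(lra)) as [dy Hs]. exists dy. split; [apply Hs|].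
  rewrite (rep beta gamma z (phi z) dy ltac:(lra) Hb Hs z ltac:(lra)).
  rewrite Yfl by lra. destruct Hs as [_ [_ [_ [_ Hend]]]]. rewrite Hend.
  unfold f, h, Pf in Hfz.
  assert (Hq : gamma * phi z 0 * Ef beta (phi z) z z / z = 2 / Ste) by lra.
  replace (gamma * phi z 0 * Ef beta (phi z) z z / (1 + beta * 1) / z) with
    ((gamma * phi z 0 * Ef beta (phi z) z z / z) / (1 + beta)) by (field; lra).
  rewrite Hq. field. lra.
Qed.
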